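(* Let $X_1,\dots,X_p$ be attributes with finite domains $D_i=\{x_i^1,\dots,x_i^{q_i}\}$, $C$ a candidate database, $\pi$ a target distribution, $k\in\{1,\dots,|C|\}$, and $A\subseteq C$ a committee with $|A|=k$. Form the binary instance: for each $i\le p$ and $j\le q_i$ a binary attribute $X_{i,j}$ with domain $\{0,1\}$; for each candidate $c\in C$ a new candidate $c'$ with $X_{i,j}(c')=1$ if $X_i(c)=x_i^j$ and $X_{i,j}(c')=0$ otherwise; target $\pi_{\mathrm{new}}$ given by $\pi_{i,j}^1=\pi_i^j$ and $\pi_{i,j}^0=1-\pi_i^j$; and $A_{\mathrm{new}}=\{c':c\in A\}$. Then (1) $\|\pi_{\mathrm{new}},r(A_{\mathrm{new}})\|_1=2\|\pi,r(A)\|_1$; (2) if $\|\pi,r(A)\|_{1,\max}\neq 0$, then $1\le \dfrac{\|\pi_{\mathrm{new}},r(A_{\mathrm{new}})\|_{1,\max}}{\|\pi,r(A)\|_{1,\max}}\le \max_i|D_i|$; (3) $\|\pi_{\mathrm{new}},r(A_{\mathrm{new}})\|_{\max}=\|\pi,r(A)\|_{\max}$.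
   Context: A candidate database is a finite set $C$ in which each candidate $c$ has a value vector $(X_1(c),\dots,X_p(c))\in D_1\times\dots\times D_p$ (different candidates may share a vector). A target distribution is $\pi=(\pi_1,\dots,\pi_p)$ with $\pi_i=(\pi_i^1,\dots,\pi_i^{q_i})$ nonnegative reals summing to $1$. For a committee $A$ of size $k$, $r_i^j(A)=|\{c\in A: X_i(c)=x_i^j\}|/k$ (and analogously for the binary instance, indexing values of $X_{i,j}$ by $0,1$). Loss functions: $\|\pi,r(A)\|_1=\sum_{i,j}|r_i^j(A)-\pi_i^j|$; $\|\pi,r(A)\|_{1,\max}=\sum_i\max_j|r_i^j(A)-\pi_i^j|$; $\|\pi,r(A)\|_{\max}=\max_{i,j}|r_i^j(A)-\pi_i^j|$. *)

(* Defs.v *)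
From HB Require Import structures.
From mathcomp Require Import all_boot all_order all_algebra.
Import Order.TTheory GRing.Theory Num.Theory.
Local Open Scope ring_scope.

Definition ratio (R : realFieldType) {C I : finType} {V : I -> finType}
  (X : C -> forall i, V i) (A : {set C}) (k : nat) {i : I} (v : V i) : R :=
  (#|[set c in A | X c i == v]|)%:R / k%:R.

Definition loss1 (R : realFieldType) {C I : finType} {V : I -> finType}
  (X : C -> forall i, V i) (pi : forall i, V i -> R) (A : {set C}) (k : nat) : R :=
  \sum_(i : I) \sum_(v : V i) `|ratio R X A k v - pi i v|.

(* || pi, r(A) ||_{1,max}  (maxima of nonnegative reals, 0 as neutral) *)
Definition loss1max (R : realFieldType) {C I : finType} {V : I -> finType}
  (X : C -> forall i, V i) (pi : forall i, V i -> R) (A : {set C}) (k : nat) : R :=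
  \sum_(i : I) \big[Num.max/0]_(v : V i) `|ratio R X A k v - pi i v|.

Definition lossmax (R : realFieldType) {C I : finType} {V : I -> finType}
  (X : C -> forall i, V i) (pi : forall i, V i -> R) (A : {set C}) (k : nat) : R :=
  \big[Num.max/0]_(i : I) \big[Num.max/0]_(v : V i) `|ratio R X A k v - pi i v|.

Definition bin_attr {p : nat} (q : 'I_p -> nat) : finType :=
  {i : 'I_p & 'I_(q i)}.

Definition bin_dom {p : nat} {q : 'I_p -> nat} : bin_attr q -> finType :=
  fun _ => bool.

Definition bin_X {C : finType} {p : nat} {q : 'I_p -> nat}
  (X : C -> forall i : 'I_p, 'I_(q i)) : C -> forall t : bin_attr q, bin_dom t :=
  fun c t => X c (tag t) == tagged t.

Definition bin_pi {R : realFieldType} {p : nat} {q : 'I_p -> nat}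
  (pi : forall i : 'I_p, 'I_(q i) -> R) : forall t : bin_attr q, bin_dom t -> R :=
  fun t b => if b then pi (tag t) (tagged t) else 1 - pi (tag t) (tagged t).

(* Main.v *)
Require Import Defs.
From HB Require Import structures.
From mathcomp Require Import all_boot all_order all_algebra.
From mathcomp Require Import ring.
Import Order.TTheory GRing.Theory Num.Theory.
Local Open Scope ring_scope.

Section M.
Variable R : realFieldType.

Lemma bmax_ge0 (T : finType) (F : T -> R) : 0 <= \big[Num.max/0]_(x : T) F x.
Proof.
elim: (index_enum T) => [|a s IH]; first by rewrite big_nil.
by rewrite big_cons le_max IH orbT.
Qed.

Lemma bmax_le (T : finType) (F : T -> R) M :
  0 <= M -> (forall x, F x <= M) -> \big[Num.max/0]_(x : T) F x <= M.
Proof. by move=> H0 H; elim/big_ind: _ => // a b ha hb; rewrite ge_max ha. Qed.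

Lemma le_bmax (T : finType) (F : T -> R) x : F x <= \big[Num.max/0]_(y : T) F y.
Proof.
have : x \in index_enum T by rewrite mem_index_enum.
elim: (index_enum T) => [//|a s IH]; rewrite inE big_cons.
case/orP=> [/eqP->|/IH h]; first by rewrite le_max lexx.
by rewrite le_max h orbT.
Qed.

Lemma sum_le_bmax (T : finType) (F : T -> R) :
  (forall x, 0 <= F x) -> \sum_(x : T) F x <= #|T|%:R * \big[Num.max/0]_(y : T) F y.
Proof.
move=> H; rewrite -sum1_card natr_sum mulr_suml.
by apply: ler_sum => x _; rewrite mul1r le_bmax.
Qed.

Lemma bmax_le_sum (T : finType) (F : T -> R) :
  (forall x, 0 <= F x) -> \big[Num.max/0]_(y : T) F y <= \sum_(x : T) F x.
Proof.
move=> H; apply: bmax_le; first by apply: sumr_ge0.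
move=> x; rewrite (bigD1 x) //= lerDl; exact: sumr_ge0.
Qed.

Lemma bmax_bool (F : bool -> R) e : F true = e -> F false = e -> 0 <= e ->
  \big[Num.max/0]_(b : bool) F b = e.
Proof.
move=> Ht Hf He; apply/eqP; rewrite eq_le bmax_le //=; last by case; rewrite ?Ht ?Hf.
by rewrite -Ht le_bmax.
Qed.
End M.
Arguments bmax_ge0 {R T} F.
Arguments bmax_le {R T} F M.
Arguments le_bmax {R T} F x.
Arguments sum_le_bmax {R T} F.
Arguments bmax_le_sum {R T} F.
Arguments bmax_bool {R} F e.

Theorem lemma1 (R : realFieldType) (C : finType) (p : nat) (q : 'I_p -> nat)
  (X : C -> forall i : 'I_p, 'I_(q i))
  (pi : forall i : 'I_p, 'I_(q i) -> R)
  (pi_ge0 : forall i j, 0 <= pi i j)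
  (pi_sum1 : forall i, \sum_(j : 'I_(q i)) pi i j = 1)
  (k : nat) (k_ge1 : (1 <= k)%N) (k_le : (k <= #|C|)%N)
  (A : {set C}) (cardA : #|A| = k) :
  [/\ loss1 R (bin_X X) (bin_pi pi) A k = 2 * loss1 R X pi A k,
      loss1max R X pi A k != 0 ->
        1 <= loss1max R (bin_X X) (bin_pi pi) A k / loss1max R X pi A k
        <= (\max_(i < p) q i)%:R
    & lossmax R (bin_X X) (bin_pi pi) A k = lossmax R X pi A k].
Proof.
pose e (i : 'I_p) (j : 'I_(q i)) : R := `|@Defs.ratio R _ _ _ X A k i j - pi i j|.
have key : forall (t : bin_attr q) (b : bool),
    `|@Defs.ratio R _ _ _ (bin_X X) A k t b - bin_pi pi t b| = e (tag t) (tagged t).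
  move=> t b; rewrite /e /Defs.ratio /bin_pi /bin_X.
  case: b.
    have -> // : [set c in A | (X c (tag t) == tagged t) == true] = [set c in A | X c (tag t) == tagged t].
    by apply/setP => c; rewrite !inE eqb_id.
  have hk : k%:R != 0 :> R by rewrite pnatr_eq0 -lt0n.
  have HC := cardsID [set c | X c (tag t) == tagged t] A.
  have -> : #|[set c in A | X c (tag t) == tagged t]| = #|A :&: [set c | X c (tag t) == tagged t]|.
    by apply: eq_card => c; rewrite !inE.
  have -> : #|[set c in A | (X c (tag t) == tagged t) == false]| =
            (k - #|A :&: [set c | X c (tag t) == tagged t]|)%N.
    rewrite -cardA -HC addKn; apply: eq_card => c; rewrite !inE eqbF_neg.
    by rewrite andbC.
  rewrite natrB; last by rewrite -cardA -HC leq_addr.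
  rewrite mulrBl divff // -normrN; congr `|_|; ring.
have sumS : forall F : forall i : 'I_p, 'I_(q i) -> R,
    \sum_(t : bin_attr q) F (tag t) (tagged t) = \sum_i \sum_j F i j.
  by move=> F; rewrite (sig_big_dep (fun _ => true) (fun _ _ => true)).
have e_ge0 : forall i j, 0 <= e i j by move=> i j; exact: normr_ge0.
have L1 : loss1max R (bin_X X) (bin_pi pi) A k = loss1 R X pi A k.
  rewrite /loss1max /loss1 -sumS; apply: eq_bigr => t _.
  by apply: bmax_bool; rewrite ?key.
split.
- rewrite /loss1 -sumS mulr_sumr; apply: eq_bigr => t _.
  rewrite big_bool /= !key -/(e (tag t) (tagged t)); ring.
- move=> Hnz.
  have Hm0 : 0 < loss1max R X pi A k.
    by rewrite lt_def Hnz /loss1max sumr_ge0 // => i _; apply: bmax_ge0.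
  rewrite L1 ler_pdivlMr // mul1r ler_pdivrMr // /loss1 /loss1max.
  apply/andP; split.
    by apply: ler_sum => i _; apply: bmax_le_sum.
  rewrite mulr_sumr; apply: ler_sum => i _.
  have h := @sum_le_bmax R 'I_(q i) (fun v => `|Defs.ratio R X A k v - pi i v|) (fun j => normr_ge0 _).
  apply: (le_trans h).
  apply: ler_wpM2r; first exact: bmax_ge0.
  by rewrite card_ord ler_nat; apply: (leq_bigmax_cond i).
- rewrite /lossmax; apply/eqP; rewrite eq_le; apply/andP; split.
    apply: bmax_le; first exact: bmax_ge0.
    move=> t; apply: bmax_le; first exact: bmax_ge0.
    move=> b; rewrite key.
    apply: (le_trans _ (le_bmax (fun i => \big[Num.max/0]_(v : 'I_(q i)) `|Defs.ratio R X A k v - pi i v|) (tag t))).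
    exact: (le_bmax (fun j => e (tag t) j)).
  apply: bmax_le; first exact: bmax_ge0.
  move=> i; apply: bmax_le; first exact: bmax_ge0.
  move=> j; apply: (le_trans _ (le_bmax _ (Tagged (fun i => 'I_(q i)) j))).
  apply: (le_trans _ (le_bmax _ true)); rewrite key /=; exact: lexx.
Qed.
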